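(* Let $\sigma^2>0$, $\boldsymbol\beta\in\mathbb{R}^p$ not identically zero with $\beta_1\le\beta_2\le\cdots\le\beta_p$, $\delta_1^2,\dots,\delta_p^2>0$ with $\sum_{i=1}^p\beta_i/\delta_i^2\ge0$, and $\Sigma=\sigma^2\boldsymbol\beta\boldsymbol\beta^\top+\mathrm{diag}(\delta_1^2,\dots,\delta_p^2)$. Let $w$ be the long-only minimum variance portfolio (the minimizer of $w^\top\Sigma w$ subject to $\sum_i w_i=1$, $w_i\ge0$), $K=\{i:w_i>0\}$, $k=|K|$, and $C_K=\sum_{j\in K}\beta_j/\delta_j^2$. Then $K=\{1,2,\dots,k\}$ and $C_K\ge0$. *)

(* Defs.v *)
From HB Require Import structures.
From mathcomp Require Import all_boot all_order all_algebra.
Set Implicit Arguments. Unset Strict Implicit. Unset Printing Implicit Defensive.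
Import Order.TTheory GRing.Theory Num.Theory.
Local Open Scope ring_scope.

Definition one_factor_cov (R : realFieldType) (p : nat) (sigma2 : R)
  (beta delta2 : 'cV[R]_p) : 'M[R]_p :=
  sigma2 *: (beta *m beta^T) + diag_mx delta2^T.

Definition port_var (R : realFieldType) (p : nat) (S : 'M[R]_p) (w : 'cV[R]_p) : R :=
  (w^T *m S *m w) 0 0.

Definition long_only (R : realFieldType) (p : nat) (w : 'cV[R]_p) : Prop :=
  \sum_i w i 0 = 1 /\ forall i, 0 <= w i 0.

Definition is_LO_minvar (R : realFieldType) (p : nat) (S : 'M[R]_p) (w : 'cV[R]_p) : Prop :=
  long_only w /\ forall v : 'cV[R]_p, long_only v -> port_var S w <= port_var S v.

Definition support_set (R : realFieldType) (p : nat) (w : 'cV[R]_p) : {set 'I_p} :=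
  [set i | 0 < w i 0].

(* Main.v *)
Require Import Defs.
From HB Require Import structures.
From mathcomp Require Import all_boot all_order all_algebra.
From mathcomp Require Import ring lra.
Import Order.TTheory GRing.Theory Num.Theory.
Set Implicit Arguments. Unset Strict Implicit.
Local Open Scope ring_scope.

Definition FF (R : realFieldType) p (s : R) (b d : 'I_p -> R) (x : 'cV[R]_p) :=
  s * (\sum_i b i * x i 0)^+2 + \sum_i d i * x i 0 ^+ 2.

Lemma foc (R : realFieldType) p (s : R) (b d : 'I_p -> R) (w v : 'cV[R]_p) :
  0 <= s -> (forall i, 0 <= d i) ->
  long_only w -> (forall x, long_only x -> FF s b d w <= FF s b d x) ->
  long_only v ->
  0 <= s * (\sum_i b i * w i 0) * (\sum_i b i * (v i 0 - w i 0))
       + \sum_i d i * w i 0 * (v i 0 - w i 0).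
Proof.
move=> hs hd [w1 w0] hmin [v1 v0].
set m := \sum_i b i * w i 0.
set bu := \sum_i b i * (v i 0 - w i 0).
set L := _ + _.
set Q := s * bu ^+ 2 + \sum_i d i * (v i 0 - w i 0) ^+ 2.
have hQ : 0 <= Q.
  apply: addr_ge0; first by apply: mulr_ge0 => //; apply: sqr_ge0.
  by apply: sumr_ge0 => i _; apply: mulr_ge0 => //; apply: sqr_ge0.
have key : forall e, 0 <= e <= 1 -> 0 <= e * (2 * L + e * Q).
  move=> e /andP [e0 e1].
  pose x : 'cV[R]_p := w + e *: (v - w).
  have xE : forall i, x i 0 = w i 0 + e * (v i 0 - w i 0) by move=> i; rewrite !mxE.
  have hx : long_only x.
    split.
      under eq_bigr => i _ do rewrite xE.
      rewrite big_split /= -mulr_sumr w1.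
      under eq_bigr => i _ do rewrite addrC.
      rewrite big_split /= v1 sumrN w1; ring.
    move=> i; rewrite xE.
    have := w0 i; have := v0 i; nra.
  have := hmin x hx.
  rewrite /FF.
  have -> : \sum_i b i * x i 0 = m + e * bu.
    rewrite /m /bu mulr_sumr -big_split /=; apply: eq_bigr => i _; rewrite xE; ring.
  have -> : \sum_i d i * x i 0 ^+ 2 = \sum_i d i * w i 0 ^+ 2
      + 2 * e * (\sum_i d i * w i 0 * (v i 0 - w i 0))
      + e ^+ 2 * (\sum_i d i * (v i 0 - w i 0) ^+ 2).
    rewrite !mulr_sumr -!big_split /=; apply: eq_bigr => i _; rewrite xE; ring.
  rewrite /L /Q => h.
  set A := \sum_i d i * w i 0 ^+ 2 in h *.
  set B := \sum_i d i * w i 0 * (v i 0 - w i 0) in h *.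
  set C := \sum_i d i * (v i 0 - w i 0) ^+ 2 in h *.
  rewrite -subr_ge0 in h.
  have -> : e * (2 * (s * m * bu + B) + e * (s * bu ^+ 2 + C)) =
     s * (m + e * bu) ^+ 2 + (A + 2 * e * B + e ^+ 2 * C) - (s * m ^+ 2 + A) by ring.
  exact h.
rewrite leNgt; apply/negP => hL.
pose e := - L / (Q - L).
have hQL : 0 < Q - L by lra.
have eE : e * (Q - L) = - L by rewrite /e mulfVK // gt_eqF.
have e0 : 0 < e by rewrite /e divr_gt0 // oppr_gt0.
have e1 : e <= 1 by rewrite /e ler_pdivrMr // mul1r; lra.
have := key e; rewrite e1 ltW //= => /(_ isT).
rewrite pmulr_rge0 //.
nra.
Qed.

Lemma down_closed p (K : {set 'I_p}) :
  (forall i j : 'I_p, (i <= j)%N -> j \in K -> i \in K) ->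
  K = [set i : 'I_p | (i < #|K|)%N].
Proof.
move=> hK; apply/setP => i; rewrite inE; apply/idP/idP.
  move=> iK.
  have hi : (i.+1 <= p)%N := ltn_ord i.
  have inj : injective (widen_ord hi) by move=> a b /(congr1 val) /= /val_inj.
  have := subset_leq_card (_ : [set widen_ord hi k | k in 'I_i.+1] \subset K).
  rewrite card_imset // card_ord; apply.
  apply/subsetP => _ /imsetP [k _ ->]; apply: (hK _ i) => //=.
  by rewrite -ltnS.
apply: contraLR; rewrite -leqNgt => iK.
have hi : (i <= p)%N := ltnW (ltn_ord i).
have : K \subset [set widen_ord hi k | k in 'I_i].
  apply/subsetP => j jK.
  have ji : (j < i)%N.
    rewrite ltnNge; apply/negP => ij; by rewrite (hK i j ij jK) in iK.
  by apply/imsetP; exists (Ordinal ji) => //; apply: val_inj.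
move/subset_leq_card => h; apply: leq_trans h _.
by rewrite (leq_trans (leq_imset_card _ _)) // card_ord.
Qed.
Lemma pv_eq (R : realFieldType) p s (beta delta2 x : 'cV[R]_p) :
  port_var (one_factor_cov s beta delta2) x =
  s * (\sum_i beta i 0 * x i 0)^+2 + \sum_i delta2 i 0 * x i 0 ^+ 2.
Proof.
rewrite /port_var /one_factor_cov mulmxDr mulmxDl -scalemxAr -scalemxAl.
have -> : x^T *m (beta *m beta^T) *m x = (x^T *m beta) *m (beta^T *m x) by rewrite !mulmxA.
rewrite mul_mx_diag !mxE big_ord1.
congr (_ + _).
  rewrite expr2; congr (_ * (_ * _)); rewrite !mxE; apply: eq_bigr => i _; rewrite !mxE mulrC //.
apply: eq_bigr => i _; rewrite !mxE; ring.
Qed.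

Lemma sumI (R : realFieldType) p (f : 'I_p -> R) i :
  \sum_k f k * (k == i)%:R = f i.
Proof.
rewrite (bigD1 i) //= eqxx mulr1 big1 ?addr0 // => k /negbTE ->; by rewrite mulr0.
Qed.

Lemma sumI2 (R : realFieldType) p (f : 'I_p -> R) c i j :
  \sum_k f k * (c * ((k == i)%:R - (k == j)%:R)) = c * (f i - f j).
Proof.
rewrite (eq_bigr (fun k => c * (f k * (k == i)%:R) - c * (f k * (k == j)%:R))); last by move=> k _; ring.
by rewrite big_split /= sumrN -!mulr_sumr !sumI; ring.
Qed.

Unset Implicit Arguments.

Theorem lemma2 (R : realFieldType) (p : nat) (sigma2 : R) (beta delta2 : 'cV[R]_p)
  (w : 'cV[R]_p) :
  0 < sigma2 ->
  beta != 0 ->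
  (forall i j : 'I_p, (i <= j)%N -> beta i 0 <= beta j 0) ->
  (forall i : 'I_p, 0 < delta2 i 0) ->
  0 <= \sum_i beta i 0 / delta2 i 0 ->
  is_LO_minvar (one_factor_cov sigma2 beta delta2) w ->
  support_set w = [set i : 'I_p | (i < #|support_set w|)%N] /\
  0 <= \sum_(j in support_set w) beta j 0 / delta2 j 0.
Proof.
move=> hs _ hb hd hB [hw hmin].
set b := fun i => beta i 0.
set d := fun i => delta2 i 0.
have hmin' : forall x, long_only x -> FF sigma2 b d w <= FF sigma2 b d x.
  by move=> x hx; have := hmin x hx; rewrite !pv_eq.
have FOC := foc (ltW hs) (fun i => ltW (hd i)) hw hmin'.
set m := \sum_i b i * w i 0.
set g := fun k => sigma2 * m * b k + d k * w k 0.
have [w1 w0] := hw.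
have pair : forall i j, 0 <= w j 0 * (g i - g j).
  move=> i j; have [->|ij] := eqVneq i j; first by rewrite subrr mulr0.
  pose v : 'cV[R]_p := \col_k (w k 0 + w j 0 * ((k == i)%:R - (k == j)%:R)).
  have vE : forall k, v k 0 - w k 0 = w j 0 * ((k == i)%:R - (k == j)%:R).
    by move=> k; rewrite !mxE; ring.
  have hv : long_only v.
    split.
      rewrite (_ : \sum_i0 v i0 0 = \sum_k (w k 0 + 1 * (w j 0 * ((k == i)%:R - (k == j)%:R)))).
        by rewrite big_split /= sumI2 w1; ring.
      by apply: eq_bigr => k _; rewrite !mxE mul1r.
    move=> k; rewrite !mxE.
    have [->|ki] := eqVneq k i; first by rewrite (negbTE ij) subr0 mulr1 addr_ge0.
    have [->|kj] := eqVneq k j; first by rewrite sub0r mulrN1 subrr.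
    by rewrite subrr mulr0 addr0.
  have E1 : \sum_k b k * (v k 0 - w k 0) = w j 0 * (b i - b j).
    by rewrite -sumI2; apply: eq_bigr => k _; rewrite vE.
  have E2 : \sum_k d k * w k 0 * (v k 0 - w k 0) = w j 0 * (d i * w i 0 - d j * w j 0).
    by rewrite -(sumI2 (fun k => d k * w k 0)); apply: eq_bigr => k _; rewrite vE.
  have := FOC v hv; rewrite -/m -/d.
  rewrite E1 E2 /g => h; nra.
have hp : (0 < p)%N.
  case: p beta delta2 w b d w1 {hmin FOC hmin' g pair w0 hw hB hb hd m} => // ? ? w ? ? .
  by rewrite big_ord0 => /eqP; rewrite eq_sym oner_eq0.
pose i0 : 'I_p := Ordinal hp.
set S := \sum_i (d i)^-1.
have dpos : forall i, 0 < d i by [].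
have S0 : 0 < S.
  rewrite /S (bigD1 i0) //= ltr_pwDl ?invr_gt0 //.
  by apply: sumr_ge0 => i _; rewrite invr_ge0 ltW.
have m0 : 0 <= m.
  pose v : 'cV[R]_p := \col_k ((d k)^-1 / S).
  have vE : forall k, v k 0 = (d k)^-1 / S by move=> k; rewrite !mxE.
  have hv : long_only v.
    split; last by move=> k; rewrite vE divr_ge0 // ltW // invr_gt0.
    under eq_bigr => k _ do rewrite vE.
    by rewrite -mulr_suml -/S divff // gt_eqF.
  have := FOC v hv; rewrite -/m -/d.
  have E1 : \sum_i b i * (v i 0 - w i 0) = (\sum_i b i / d i) / S - m.
    rewrite /m mulr_suml -sumrB; apply: eq_bigr => k _; rewrite vE; ring.
  have E2 : \sum_i d i * w i 0 * (v i 0 - w i 0) =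
      - \sum_i d i * (w i 0 - v i 0) ^+ 2 - S^-1 * \sum_i (w i 0 - v i 0).
    rewrite mulr_sumr -sumrN -sumrB; apply: eq_bigr => k _; rewrite vE.
    have hk := dpos k; field; by rewrite !gt_eqF.
  have E3 : \sum_i (w i 0 - v i 0) = 0 by rewrite sumrB w1; case: hv => -> _; rewrite subrr.
  have E4 : 0 <= \sum_i d i * (w i 0 - v i 0) ^+ 2.
    by apply: sumr_ge0 => k _; rewrite mulr_ge0 ?sqr_ge0 // ltW.
  have hB' : 0 <= (\sum_i b i / d i) / S by rewrite divr_ge0 // ltW.
  rewrite E1 E2 E3 mulr0 subr0 => h.
  rewrite leNgt; apply/negP => hm.
  move: h hB' E4 hs hm; set B := _ / S; set Q := \sum_i _ => h hB' E4 hs' hm.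
  have h1 : 0 <= sigma2 * (- m) * B by rewrite mulr_ge0 // mulr_ge0 ?oppr_ge0 ?ltW.
  have h2 : 0 < sigma2 * (m * m) by rewrite mulr_gt0 // nmulr_rgt0.
  move: h; rewrite mulrBr; lra.
have wz : forall j, ~~ (0 < w j 0) -> w j 0 = 0.
  by move=> j; rewrite lt_neqAle w0 andbT negbK => /eqP <-.
split.
  apply: down_closed => i j ij; rewrite !inE => wj.
  apply: contraT => /wz wi0.
  have := pair i j; rewrite /g wi0 mulr0 addr0.
  have h1 : 0 <= sigma2 * m * (b j - b i).
    by rewrite mulr_ge0 ?(mulr_ge0 (ltW hs) m0) // subr_ge0; apply: hb.
  have h2 : 0 < d j * w j 0 by rewrite mulr_gt0.
  have h3 : sigma2 * m * b i - (sigma2 * m * b j + d j * w j 0) < 0 by lra.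
  by rewrite pmulr_rge0 // leNgt h3.
have [i1 hi1] : exists i1, 0 < w i1 0.
  case: (pickP (fun i => 0 < w i 0)) => [i1 hi1 | h]; first by exists i1.
  move: w1; rewrite big1 => [/eqP|i _]; first by rewrite eq_sym oner_eq0.
  by apply: wz; rewrite h.
set lam := g i1.
have gK : forall j, 0 < w j 0 -> g j = lam.
  move=> j hj; apply/eqP; rewrite eq_le.
  have := pair i1 j; have := pair j i1; rewrite !pmulr_rge0 // !subr_ge0 => -> -> //.
have lam0 : 0 < lam.
  have E : \sum_i w i 0 * g i = lam.
    rewrite -[RHS]mulr1 -w1 mulr_sumr; apply: eq_bigr => j _.
    have [hj|hj] := boolP (0 < w j 0); first by rewrite gK // mulrC.
    by rewrite wz // !mul0r mulr0.
  have E2 : \sum_i w i 0 * g i = sigma2 * m * m + \sum_i d i * w i 0 ^+ 2.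
    rewrite (_ : sigma2 * m * m = \sum_i sigma2 * m * (b i * w i 0)); last by rewrite -mulr_sumr.
    rewrite -big_split /=; apply: eq_bigr => j _; rewrite /g; ring.
  have : 0 < \sum_i d i * w i 0 ^+ 2.
    rewrite (bigD1 i1) //= ltr_pwDl ?mulr_gt0 ?exprn_gt0 //.
    by apply: sumr_ge0 => i _; rewrite mulr_ge0 ?sqr_ge0 ?ltW.
  have : 0 <= sigma2 * m * m by rewrite mulr_ge0 // (mulr_ge0 (ltW hs) m0).
  rewrite -E E2; lra.
rewrite -(pmulr_rge0 _ lam0) mulr_sumr big_mkcond /=.
rewrite (eq_bigr (fun j => b j * w j 0 + (if 0 < w j 0 then sigma2 * m * (b j ^+ 2 / d j) else 0))).
  rewrite big_split /= -/m addr_ge0 //; apply: sumr_ge0 => j _; case: ifP => // _.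
  by rewrite mulr_ge0 ?(mulr_ge0 (ltW hs) m0) // mulr_ge0 ?sqr_ge0 // invr_ge0 ltW.
move=> j _; rewrite inE.
have [hj|hj] := boolP (0 < w j 0); last by rewrite wz // mulr0 addr0.
have := gK j hj; rewrite /lam /g => <-.
have hk := dpos j.
rewrite /b /d in hk *; field; by rewrite gt_eqF.
Qed.
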